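(* Let $G$ and $H$ be dicotic nonzugzwang scoring games all of whose terminal positions are numbers. Then for every $t\geq 0$, $Ls((G+H)_t)=Ls(G_t+H_t)$ and $Rs((G+H)_t)=Rs(G_t+H_t)$. Moreover $\sigma(G+H)\leq\max(\sigma(G),\sigma(H))$, and if $\sigma(H)<\sigma(G)$ then $\sigma(G+H)=\sigma(G)$. In particular, $(G+H)_{\sigma(G+H)}=G_{\sigma(G)}+H_{\sigma(H)}$.
   Context: A scoring game is $G=\langle G^L\mid G^R\rangle$ with $G^L,G^R$ finite nonempty sets of scoring games or empty sets decorated with a real, $\emptyset^s$; $\langle\emptyset^s\mid\emptyset^s\rangle$ is the number $s$. $Ls(\langle\emptyset^s\mid G^R\rangle)=s$, $Rs(\langle G^L\mid\emptyset^s\rangle)=s$, otherwise $Ls(G)=\max_{G^l\in G^L}Rs(G^l)$, $Rs(G)=\min_{G^r\in G^R}Ls(G^r)$. Disjunctive sum $G_1+G_2$: Left options are all $G_1^l+G_2$ and $G_1+G_2^l$, and if neither component has a Left option the Left side is $\emptyset^{\ell_1+\ell_2}$ ($\emptyset^{\ell_i}$ the Left side of $G_i$); symmetrically for Right. In particular $H+c$ for a number $c$ adds $c$ to every terminal score. Dicotic: at every position both players have options or neither; nonzugzwang: $Ls(H)\ge Rs(H)$ at every position $H$. Cooling: if $G$ is a number $k$, $G_t=k$ and $\sigma(G)=0$. Otherwise $\widetilde G_t=\langle \{G^l_t-t\}_{G^l\in G^L}\mid \{G^r_t+t\}_{G^r\in G^R}\rangle$, $t_0=\min\{t\ge0: Ls(\widetilde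 G_t)=Rs(\widetilde G_t)\}$ (exists for dicotic nonzugzwang games), $G_t=\widetilde G_t$ for $t\le t_0$ and $G_t$ is the number $Ls(\widetilde G_{t_0})$ for $t>t_0$; $\sigma(G)=t_0$ is the temperature. For $t\geq\sigma(G)$, $G_t$ is a number. *)

(* Defs.v *)
From Stdlib Require Import Reals List ClassicalEpsilon.
Open Scope R_scope.

(** Scoring games.  [Gm a GL b GR] represents <GL | GR>, where an empty
    left list GL is read as the left side  ∅^a  and an empty right list
    GR as  ∅^b.  When a list is nonempty its decoration is ignored by all
    definitions below (Ls, Rs, sums, cooling, predicates). *)
Inductive game : Type :=
  Gm : R -> list game -> R -> list game -> game.

Definition num (s : R) : game := Gm s nil s nil.

Fixpoint Ls (G : game) : R :=
  match G with
  | Gm a GL _ _ =>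
      match GL with
      | nil => a
      | g :: gs => fold_right (fun h m => Rmax (Rs h) m) (Rs g) gs
      end
  end
with Rs (G : game) : R :=
  match G with
  | Gm _ _ b GR =>
      match GR with
      | nil => b
      | g :: gs => fold_right (fun h m => Rmin (Ls h) m) (Ls g) gs
      end
  end.

Fixpoint gadd (G H : game) {struct G} : game :=
  match G with
  | Gm a GL b GR =>
      let fix addG (H : game) : game :=
        match H with
        | Gm c HL d HR =>
            Gm (a + c) (map (fun g => gadd g H) GL ++ map addG HL)
               (b + d) (map (fun g => gadd g H) GR ++ map addG HR)
        end in
      addG H
  end.

Definition isnum (G : game) : bool :=
  match G with
  | Gm a nil b nil => if Req_EM_T a b then true else false
  | _ => false
  end.

(** t0 = min { t >= 0 : Ls(f t) = Rs(f t) } (chosen by classical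
    description; when no minimum exists the value is unspecified). *)
Definition is_tmin (f : R -> game) (t0 : R) : Prop :=
  0 <= t0 /\ Ls (f t0) = Rs (f t0) /\
  (forall t, 0 <= t -> Ls (f t) = Rs (f t) -> t0 <= t).

Definition tmin (f : R -> game) : R :=
  epsilon (inhabits 0) (is_tmin f).

Fixpoint cool (G : game) : R -> game :=
  match G with
  | Gm a GL b GR =>
      let tl := fun t =>
        Gm a (map (fun g => gadd (cool g t) (num (- t))) GL)
           b (map (fun g => gadd (cool g t) (num t)) GR) in
      if isnum G then fun _ => G
      else fun t => if Rle_dec t (tmin tl) then tl t
                    else num (Ls (tl (tmin tl)))
  end.

Definition tilde (G : game) (t : R) : game :=
  match G with
  | Gm a GL b GR =>
      Gm a (map (fun g => gadd (cool g t) (num (- t))) GL)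
         b (map (fun g => gadd (cool g t) (num t)) GR)
  end.

Definition temperature (G : game) : R :=
  if isnum G then 0 else tmin (tilde G).

Fixpoint hered (P : game -> Prop) (G : game) : Prop :=
  P G /\
  match G with
  | Gm _ GL _ GR =>
      fold_right (fun g acc => hered P g /\ acc) True GL /\
      fold_right (fun g acc => hered P g /\ acc) True GR
  end.

Definition dicotic_pos (G : game) : Prop :=
  match G with Gm _ GL _ GR => (GL = nil <-> GR = nil) end.

Definition dicotic (G : game) : Prop := hered dicotic_pos G.

Definition nonzugzwang (G : game) : Prop := hered (fun P => Ls P >= Rs P) G.

Definition terminal_numbers (G : game) : Prop :=
  hered (fun P => match P with Gm a GL b GR => GL = nil -> GR = nil -> a = b end) G.

(* Main.v *)
From Stdlib Require Import Reals Lra List ClassicalEpsilon Classical.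
Require Import Defs.
Open Scope R_scope.


Definition game_ind2 (P : game -> Prop)
  (HP : forall a L b Rl, (forall g, In g L -> P g) -> (forall g, In g Rl -> P g) -> P (Gm a L b Rl)) :
  forall G, P G :=
  fix F G := match G with
  | Gm a L b Rl => HP a L b Rl
      ((fix FL (l : list game) : forall g, In g l -> P g := match l with
         | nil => fun g (i : In g nil) => False_ind _ i
         | x :: xs => fun g i => match i with or_introl e => eq_ind x P (F x) g e | or_intror i' => FL xs g i' end end) L)
      ((fix FL (l : list game) : forall g, In g l -> P g := match l with
         | nil => fun g (i : In g nil) => False_ind _ i
         | x :: xs => fun g i => match i with or_introl e => eq_ind x P (F x) g e | or_intror i' => FL xs g i' end end) Rl)
  end.

Lemma fold_max_ub (f : game -> R) g gs y : In y (g::gs) -> f y <= fold_right (fun h m => Rmax (f h) m) (f g) gs.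
Proof.
  revert y; induction gs as [|x xs IH]; intros y Hy; simpl in *.
  - destruct Hy as [<-|[]]; lra.
  - destruct Hy as [<-|[<-|Hy]].
    + specialize (IH g (or_introl eq_refl)). eapply Rle_trans; [exact IH|apply Rmax_r].
    + apply Rmax_l.
    + specialize (IH y (or_intror Hy)). eapply Rle_trans; [exact IH|apply Rmax_r].
Qed.

Lemma fold_max_att (f : game -> R) g gs : exists y, In y (g::gs) /\ fold_right (fun h m => Rmax (f h) m) (f g) gs = f y.
Proof.
  induction gs as [|x xs IH]; simpl.
  - exists g; auto.
  - destruct IH as [y [Hy E]]. simpl in E. rewrite E.
    unfold Rmax; destruct (Rle_dec (f x) (f y)).
    + exists y; split; auto. destruct Hy; auto.
    + exists x; auto.
Qed.

Lemma fold_min_lb (f : game -> R) g gs y : In y (g::gs) -> fold_right (fun h m => Rmin (f h) m) (f g) gs <= f y.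
Proof.
  revert y; induction gs as [|x xs IH]; intros y Hy; simpl in *.
  - destruct Hy as [<-|[]]; lra.
  - destruct Hy as [<-|[<-|Hy]].
    + specialize (IH g (or_introl eq_refl)). eapply Rle_trans; [apply Rmin_r|exact IH].
    + apply Rmin_l.
    + specialize (IH y (or_intror Hy)). eapply Rle_trans; [apply Rmin_r|exact IH].
Qed.

Lemma fold_min_att (f : game -> R) g gs : exists y, In y (g::gs) /\ fold_right (fun h m => Rmin (f h) m) (f g) gs = f y.
Proof.
  induction gs as [|x xs IH]; simpl.
  - exists g; auto.
  - destruct IH as [y [Hy E]]. simpl in E. rewrite E.
    unfold Rmin; destruct (Rle_dec (f x) (f y)).
    + exists x; auto.
    + exists y; split; auto. destruct Hy; auto.
Qed.

Lemma Ls_nil a b Rl : Ls (Gm a nil b Rl) = a. Proof. reflexivity. Qed.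
Lemma Rs_nil a b L : Rs (Gm a L b nil) = b. Proof. destruct L; reflexivity. Qed.
Lemma Ls_cons a g gs b Rl : Ls (Gm a (g::gs) b Rl) = fold_right (fun h m => Rmax (Rs h) m) (Rs g) gs.
Proof. reflexivity. Qed.
Lemma Rs_cons a L b g gs : Rs (Gm a L b (g::gs)) = fold_right (fun h m => Rmin (Ls h) m) (Ls g) gs.
Proof. destruct L; reflexivity. Qed.

Lemma Ls_ub a L b Rl y : In y L -> Rs y <= Ls (Gm a L b Rl).
Proof. destruct L as [|g gs]; [intros []|]. rewrite Ls_cons. apply fold_max_ub. Qed.
Lemma Rs_lb a L b Rl y : In y Rl -> Rs (Gm a L b Rl) <= Ls y.
Proof. destruct Rl as [|g gs]; [intros []|]. rewrite Rs_cons. apply fold_min_lb. Qed.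
Lemma Ls_att a L b Rl : L <> nil -> exists y, In y L /\ Ls (Gm a L b Rl) = Rs y.
Proof. destruct L as [|g gs]; [congruence|]. intros _. rewrite Ls_cons. apply fold_max_att. Qed.
Lemma Rs_att a L b Rl : Rl <> nil -> exists y, In y Rl /\ Rs (Gm a L b Rl) = Ls y.
Proof. destruct Rl as [|g gs]; [congruence|]. intros _. rewrite Rs_cons. apply fold_min_att. Qed.

Lemma Ls_le a L b Rl x : (L = nil -> a <= x) -> (forall y, In y L -> Rs y <= x) -> Ls (Gm a L b Rl) <= x.
Proof.
  intros H1 H2. destruct L as [|g gs]. rewrite Ls_nil; auto.
  destruct (Ls_att a (g::gs) b Rl) as [y [Hy E]]. congruence. rewrite E; auto.
Qed.
Lemma Rs_ge a L b Rl x : (Rl = nil -> x <= b) -> (forall y, In y Rl -> x <= Ls y) -> x <= Rs (Gm a L b Rl).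
Proof.
  intros H1 H2. destruct Rl as [|g gs]. rewrite Rs_nil; auto.
  destruct (Rs_att a L b (g::gs)) as [y [Hy E]]. congruence. rewrite E; auto.
Qed.

Lemma Ls_shift a L b Rl a' L' b' Rl' c :
  (L = nil <-> L' = nil) -> (L = nil -> a = a' + c) ->
  (forall y, In y L -> exists y', In y' L' /\ Rs y = Rs y' + c) ->
  (forall y', In y' L' -> exists y, In y L /\ Rs y = Rs y' + c) ->
  Ls (Gm a L b Rl) = Ls (Gm a' L' b' Rl') + c.
Proof.
  intros Hn Ha H1 H2. destruct L as [|g gs].
  - assert (L' = nil) by (apply Hn; auto). subst. rewrite !Ls_nil; auto.
  - assert (L' <> nil) by (intro E; apply Hn in E; discriminate).
    destruct (Ls_att a (g::gs) b Rl) as [y [Hy E]]. congruence.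
    destruct (Ls_att a' L' b' Rl') as [y' [Hy' E']]; auto.
    destruct (H1 y Hy) as [z [Hz Ez]]. destruct (H2 y' Hy') as [w [Hw Ew]].
    pose proof (Ls_ub a (g::gs) b Rl w Hw). pose proof (Ls_ub a' L' b' Rl' z Hz). lra.
Qed.
Lemma Rs_shift a L b Rl a' L' b' Rl' c :
  (Rl = nil <-> Rl' = nil) -> (Rl = nil -> b = b' + c) ->
  (forall y, In y Rl -> exists y', In y' Rl' /\ Ls y = Ls y' + c) ->
  (forall y', In y' Rl' -> exists y, In y Rl /\ Ls y = Ls y' + c) ->
  Rs (Gm a L b Rl) = Rs (Gm a' L' b' Rl') + c.
Proof.
  intros Hn Ha H1 H2. destruct Rl as [|g gs].
  - assert (Rl' = nil) by (apply Hn; auto). subst. rewrite !Rs_nil; auto.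
  - assert (Rl' <> nil) by (intro E; apply Hn in E; discriminate).
    destruct (Rs_att a L b (g::gs)) as [y [Hy E]]. congruence.
    destruct (Rs_att a' L' b' Rl') as [y' [Hy' E']]; auto.
    destruct (H1 y Hy) as [z [Hz Ez]]. destruct (H2 y' Hy') as [w [Hw Ew]].
    pose proof (Rs_lb a L b (g::gs) w Hw). pose proof (Rs_lb a' L' b' Rl' z Hz). lra.
Qed.

Lemma gadd_unfold a L b Rl c M d N :
  gadd (Gm a L b Rl) (Gm c M d N) =
  Gm (a + c) (map (fun g => gadd g (Gm c M d N)) L ++ map (fun h => gadd (Gm a L b Rl) h) M)
     (b + d) (map (fun g => gadd g (Gm c M d N)) Rl ++ map (fun h => gadd (Gm a L b Rl) h) N).
Proof. reflexivity. Qed.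

Lemma tilde_unfold a L b Rl t : tilde (Gm a L b Rl) t =
  Gm a (map (fun g => gadd (cool g t) (num (- t))) L) b (map (fun g => gadd (cool g t) (num t)) Rl).
Proof. reflexivity. Qed.

Definition sig (G : game) := tmin (tilde G).

Lemma cool_unfold G t : cool G t = if isnum G then G else
  if Rle_dec t (sig G) then tilde G t else num (Ls (tilde G (sig G))).
Proof. destruct G as [a L b Rl]. unfold cool; fold cool. destruct (isnum _); reflexivity. Qed.


Lemma fold_and_iff (P: game -> Prop) l : fold_right (fun g acc => P g /\ acc) True l <-> (forall g, In g l -> P g).
Proof.
  induction l as [|x xs IH]; simpl.
  - split; auto. intros _ g [].
  - rewrite IH. split.
    + intros [H1 H2] g [<-|Hg]; auto.
    + intros H; split; auto.
Qed.

Lemma hered_iff P a L b Rl : hered P (Gm a L b Rl) <-> P (Gm a L b Rl) /\ (forall g, In g L -> hered P g) /\ (forall g, In g Rl -> hered P g).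
Proof. simpl hered. rewrite !fold_and_iff. tauto. Qed.

Definition good G := dicotic G /\ nonzugzwang G /\ terminal_numbers G.

Lemma good_iff a L b Rl : good (Gm a L b Rl) <-> ((L = nil <-> Rl = nil) /\ (L = nil -> Rl = nil -> a = b) /\ Rs (Gm a L b Rl) <= Ls (Gm a L b Rl) /\ (forall g, In g L -> good g) /\ (forall g, In g Rl -> good g)).
Proof.
  unfold good, dicotic, nonzugzwang, terminal_numbers. rewrite !hered_iff. simpl dicotic_pos.
  split.
  - intros [[D1 [D2 D3]] [[N1 [N2 N3]] [T1 [T2 T3]]]]. repeat split; try tauto; try lra; firstorder.
  - intros [D1 [T1 [N1 [G1 G2]]]]. repeat split; try tauto; try lra; intros g Hg; firstorder.
Qed.

Lemma good_num c : good (num c).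
Proof. unfold num. apply good_iff. split; [tauto|]. split; [auto|]. split; [rewrite Ls_nil, Rs_nil; lra|]. split; intros g []. Qed.

Lemma map_nil_iff {A B} (f : A -> B) l : map f l = nil <-> l = nil.
Proof. destruct l; simpl; split; congruence. Qed.

Lemma app_nil_iff {A} (l1 l2 : list A) : l1 ++ l2 = nil <-> l1 = nil /\ l2 = nil.
Proof. destruct l1, l2; simpl; split; intuition congruence. Qed.

Lemma Ls_map2 (f1 f2 g1 g2 : game -> game) a L1 L2 b Rl a' b' Rl' c :
  (L1 = nil -> L2 = nil -> a = a' + c) ->
  (forall x, In x L1 -> Rs (f1 x) = Rs (g1 x) + c) ->
  (forall x, In x L2 -> Rs (f2 x) = Rs (g2 x) + c) ->
  Ls (Gm a (map f1 L1 ++ map f2 L2) b Rl) = Ls (Gm a' (map g1 L1 ++ map g2 L2) b' Rl') + c.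
Proof.
  intros Ha H1 H2. apply Ls_shift.
  - rewrite !app_nil_iff, !map_nil_iff. tauto.
  - rewrite app_nil_iff, !map_nil_iff. tauto.
  - intros y Hy. apply in_app_iff in Hy. destruct Hy as [Hy|Hy]; apply in_map_iff in Hy; destruct Hy as [x [<- Hx]].
    + exists (g1 x); split; auto. apply in_app_iff; left; apply in_map; auto.
    + exists (g2 x); split; auto. apply in_app_iff; right; apply in_map; auto.
  - intros y Hy. apply in_app_iff in Hy. destruct Hy as [Hy|Hy]; apply in_map_iff in Hy; destruct Hy as [x [<- Hx]].
    + exists (f1 x); split; auto. apply in_app_iff; left; apply in_map; auto.
    + exists (f2 x); split; auto. apply in_app_iff; right; apply in_map; auto.
Qed.

Lemma Rs_map2 (f1 f2 g1 g2 : game -> game) a L b Rl1 Rl2 a' L' b' c :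
  (Rl1 = nil -> Rl2 = nil -> b = b' + c) ->
  (forall x, In x Rl1 -> Ls (f1 x) = Ls (g1 x) + c) ->
  (forall x, In x Rl2 -> Ls (f2 x) = Ls (g2 x) + c) ->
  Rs (Gm a L b (map f1 Rl1 ++ map f2 Rl2)) = Rs (Gm a' L' b' (map g1 Rl1 ++ map g2 Rl2)) + c.
Proof.
  intros Ha H1 H2. apply Rs_shift.
  - rewrite !app_nil_iff, !map_nil_iff. tauto.
  - rewrite app_nil_iff, !map_nil_iff. tauto.
  - intros y Hy. apply in_app_iff in Hy. destruct Hy as [Hy|Hy]; apply in_map_iff in Hy; destruct Hy as [x [<- Hx]].
    + exists (g1 x); split; auto. apply in_app_iff; left; apply in_map; auto.
    + exists (g2 x); split; auto. apply in_app_iff; right; apply in_map; auto.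
  - intros y Hy. apply in_app_iff in Hy. destruct Hy as [Hy|Hy]; apply in_map_iff in Hy; destruct Hy as [x [<- Hx]].
    + exists (f1 x); split; auto. apply in_app_iff; left; apply in_map; auto.
    + exists (f2 x); split; auto. apply in_app_iff; right; apply in_map; auto.
Qed.

Lemma Ls_map1 (f : game -> game) a L b Rl a' b' Rl' c :
  (L = nil -> a = a' + c) -> (forall x, In x L -> Rs (f x) = Rs x + c) ->
  Ls (Gm a (map f L) b Rl) = Ls (Gm a' L b' Rl') + c.
Proof.
  intros Ha H1. apply Ls_shift.
  - apply map_nil_iff.
  - rewrite map_nil_iff; auto.
  - intros y Hy. apply in_map_iff in Hy. destruct Hy as [x [<- Hx]]. exists x; auto.
  - intros y Hy. exists (f y); split; auto. apply in_map; auto.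
Qed.
Lemma Rs_map1 (f : game -> game) a L b Rl a' L' b' c :
  (Rl = nil -> b = b' + c) -> (forall x, In x Rl -> Ls (f x) = Ls x + c) ->
  Rs (Gm a L b (map f Rl)) = Rs (Gm a' L' b' Rl) + c.
Proof.
  intros Ha H1. apply Rs_shift.
  - apply map_nil_iff.
  - rewrite map_nil_iff; auto.
  - intros y Hy. apply in_map_iff in Hy. destruct Hy as [x [<- Hx]]. exists x; auto.
  - intros y Hy. exists (f y); split; auto. apply in_map; auto.
Qed.

Lemma gadd_num_r a L b Rl c : gadd (Gm a L b Rl) (num c) =
  Gm (a + c) (map (fun g => gadd g (num c)) L) (b + c) (map (fun g => gadd g (num c)) Rl).
Proof. unfold num at 1. rewrite gadd_unfold. cbn [map]. rewrite !app_nil_r. reflexivity. Qed.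

Lemma gadd_num_l a L b Rl c : gadd (num c) (Gm a L b Rl) =
  Gm (c + a) (map (fun g => gadd (num c) g) L) (c + b) (map (fun g => gadd (num c) g) Rl).
Proof. unfold num at 1. rewrite gadd_unfold. cbn [map app]. reflexivity. Qed.

Lemma sh1 X c : Ls (gadd X (num c)) = Ls X + c /\ Rs (gadd X (num c)) = Rs X + c.
Proof.
  induction X as [a L b Rl IHL IHR] using game_ind2. rewrite gadd_num_r. split.
  - apply Ls_map1; auto. intros x Hx; apply IHL; auto.
  - apply Rs_map1; auto. intros x Hx; apply IHR; auto.
Qed.

Lemma sh1l X c : Ls (gadd (num c) X) = Ls X + c /\ Rs (gadd (num c) X) = Rs X + c.
Proof.
  induction X as [a L b Rl IHL IHR] using game_ind2. rewrite gadd_num_l. split.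
  - apply Ls_map1; [intros; lra|]. intros x Hx; apply IHL; auto.
  - apply Rs_map1; [intros; lra|]. intros x Hx; apply IHR; auto.
Qed.

Lemma sh2 X Y c : Ls (gadd (gadd X (num c)) Y) = Ls (gadd X Y) + c /\ Rs (gadd (gadd X (num c)) Y) = Rs (gadd X Y) + c.
Proof.
  revert Y. induction X as [a L b Rl IHL IHR] using game_ind2. intros Y.
  induction Y as [e M f N IHM IHN] using game_ind2.
  rewrite gadd_num_r. rewrite !gadd_unfold. rewrite !map_map. rewrite gadd_num_r in IHM, IHN.
  split.
  - apply Ls_map2; [intros; lra| |].
    + intros x Hx. apply IHL; auto.
    + intros x Hx. apply IHM; auto.
  - apply Rs_map2; [intros; lra| |].
    + intros x Hx. apply IHR; auto.
    + intros x Hx. apply IHN; auto.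
Qed.

Lemma sh3 X Y c : Ls (gadd X (gadd Y (num c))) = Ls (gadd X Y) + c /\ Rs (gadd X (gadd Y (num c))) = Rs (gadd X Y) + c.
Proof.
  revert Y. induction X as [a L b Rl IHL IHR] using game_ind2. intros Y.
  induction Y as [e M f N IHM IHN] using game_ind2.
  rewrite gadd_num_r. rewrite !gadd_unfold. rewrite !map_map. 
  split.
  - apply Ls_map2; [intros; lra| |].
    + intros x Hx. destruct (IHL x Hx (Gm e M f N)) as [A B]; rewrite gadd_num_r in A, B; auto.
    + intros x Hx. apply IHM; auto.
  - apply Rs_map2; [intros; lra| |].
    + intros x Hx. destruct (IHR x Hx (Gm e M f N)) as [A B]; rewrite gadd_num_r in A, B; auto.
    + intros x Hx. apply IHN; auto.
Qed.


Lemma ineqs A B : good A -> good B ->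
  Ls (gadd A B) <= Ls A + Ls B /\ Rs (gadd A B) <= Rs A + Ls B /\ Rs (gadd A B) <= Ls A + Rs B /\
  Rs A + Rs B <= Rs (gadd A B) /\ Ls A + Rs B <= Ls (gadd A B) /\ Rs A + Ls B <= Ls (gadd A B).
Proof.
  revert B. induction A as [a L b Rl IHL IHR] using game_ind2. intros B.
  induction B as [c M d N IHM IHN] using game_ind2. intros GA GB.
  pose proof GA as GA'; apply good_iff in GA'; destruct GA' as [DA [TA [NA [GL GR]]]].
  pose proof GB as GB'; apply good_iff in GB'; destruct GB' as [DB [TB [NB [GM GN]]]].
  assert (I1 : Ls (gadd (Gm a L b Rl) (Gm c M d N)) <= Ls (Gm a L b Rl) + Ls (Gm c M d N)).
  { rewrite gadd_unfold. apply Ls_le.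
    - intros E. apply app_nil_iff in E. destruct E as [E1 E2]. rewrite map_nil_iff in E1, E2. subst L M. rewrite !Ls_nil. lra.
    - intros y Hy. apply in_app_iff in Hy. destruct Hy as [Hy|Hy]; apply in_map_iff in Hy; destruct Hy as [x [<- Hx]].
      + destruct (IHL x Hx (Gm c M d N) (GL x Hx) GB) as (_&h2&_). pose proof (Ls_ub a L b Rl x Hx). lra.
      + destruct (IHM x Hx GA (GM x Hx)) as (_&_&h3&_). pose proof (Ls_ub c M d N x Hx). lra. }
  assert (I3 : Rs (Gm a L b Rl) + Rs (Gm c M d N) <= Rs (gadd (Gm a L b Rl) (Gm c M d N))).
  { rewrite gadd_unfold. apply Rs_ge.
    - intros E. apply app_nil_iff in E. destruct E as [E1 E2]. rewrite map_nil_iff in E1, E2. subst Rl N. rewrite !Rs_nil. lra.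
    - intros y Hy. apply in_app_iff in Hy. destruct Hy as [Hy|Hy]; apply in_map_iff in Hy; destruct Hy as [x [<- Hx]].
      + destruct (IHR x Hx (Gm c M d N) (GR x Hx) GB) as (_&_&_&_&h5&_). pose proof (Rs_lb a L b Rl x Hx). lra.
      + destruct (IHN x Hx GA (GN x Hx)) as (_&_&_&_&_&h6). pose proof (Rs_lb c M d N x Hx). lra. }
  assert (I2 : Rs (gadd (Gm a L b Rl) (Gm c M d N)) <= Rs (Gm a L b Rl) + Ls (Gm c M d N)).
  { destruct Rl as [|r0 rs].
    - assert (L = nil) by (apply DA; auto). subst L. assert (a = b) by (apply TA; auto). subst b.
      change (Gm a nil a nil) with (num a). destruct (sh1l (Gm c M d N) a) as [_ E]. rewrite E. unfold num. rewrite Rs_nil. lra.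
    - destruct (Rs_att a L b (r0::rs)) as [r [Hr E]]; [discriminate|]. rewrite E.
      destruct (IHR r Hr (Gm c M d N) (GR r Hr) GB) as (h1&_).
      assert (Rs (gadd (Gm a L b (r0::rs)) (Gm c M d N)) <= Ls (gadd r (Gm c M d N))).
      { rewrite gadd_unfold. apply Rs_lb. apply in_app_iff; left. apply in_map_iff. exists r; auto. }
      lra. }
  assert (I2b : Rs (gadd (Gm a L b Rl) (Gm c M d N)) <= Ls (Gm a L b Rl) + Rs (Gm c M d N)).
  { destruct N as [|n0 ns].
    - assert (M = nil) by (apply DB; auto). subst M. assert (c = d) by (apply TB; auto). subst d.
      change (Gm c nil c nil) with (num c). destruct (sh1 (Gm a L b Rl) c) as [_ E]. rewrite E. unfold num. rewrite Rs_nil. lra.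
    - destruct (Rs_att c M d (n0::ns)) as [n [Hn E]]; [discriminate|]. rewrite E.
      destruct (IHN n Hn GA (GN n Hn)) as (h1&_).
      assert (Rs (gadd (Gm a L b Rl) (Gm c M d (n0::ns))) <= Ls (gadd (Gm a L b Rl) n)).
      { rewrite gadd_unfold. apply Rs_lb. apply in_app_iff; right. apply in_map_iff. exists n; auto. }
      lra. }
  assert (I4 : Ls (Gm a L b Rl) + Rs (Gm c M d N) <= Ls (gadd (Gm a L b Rl) (Gm c M d N))).
  { destruct L as [|l0 ls].
    - assert (Rl = nil) by (apply DA; auto). subst Rl. assert (a = b) by (apply TA; auto). subst b.
      change (Gm a nil a nil) with (num a). destruct (sh1l (Gm c M d N) a) as [E _]. rewrite E. unfold num. rewrite Ls_nil. lra.
    - destruct (Ls_att a (l0::ls) b Rl) as [l [Hl E]]; [discriminate|]. rewrite E.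
      destruct (IHL l Hl (Gm c M d N) (GL l Hl) GB) as (_&_&_&h4&_).
      assert (Rs (gadd l (Gm c M d N)) <= Ls (gadd (Gm a (l0::ls) b Rl) (Gm c M d N))).
      { rewrite gadd_unfold. apply Ls_ub. apply in_app_iff; left. apply in_map_iff. exists l; auto. }
      lra. }
  assert (I4b : Rs (Gm a L b Rl) + Ls (Gm c M d N) <= Ls (gadd (Gm a L b Rl) (Gm c M d N))).
  { destruct M as [|m0 ms].
    - assert (N = nil) by (apply DB; auto). subst N. assert (c = d) by (apply TB; auto). subst d.
      change (Gm c nil c nil) with (num c). destruct (sh1 (Gm a L b Rl) c) as [E _]. rewrite E. unfold num. rewrite Ls_nil. lra.
    - destruct (Ls_att c (m0::ms) d N) as [m [Hm E]]; [discriminate|]. rewrite E.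
      destruct (IHM m Hm GA (GM m Hm)) as (_&_&_&h4&_).
      assert (Rs (gadd (Gm a L b Rl) m) <= Ls (gadd (Gm a L b Rl) (Gm c (m0::ms) d N))).
      { rewrite gadd_unfold. apply Ls_ub. apply in_app_iff; right. apply in_map_iff. exists m; auto. }
      lra. }
  tauto.
Qed.

Lemma good_sum A B : good A -> good B -> good (gadd A B).
Proof.
  revert B. induction A as [a L b Rl IHL IHR] using game_ind2. intros B.
  induction B as [c M d N IHM IHN] using game_ind2. intros GA GB.
  pose proof (ineqs _ _ GA GB) as (_&I2&_&_&_&I4b).
  pose proof GA as GA'; apply good_iff in GA'; destruct GA' as [DA [TA [NA [GL GR]]]].
  pose proof GB as GB'; apply good_iff in GB'; destruct GB' as [DB [TB [NB [GM GN]]]].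
  rewrite gadd_unfold in *. apply good_iff. split; [|split; [|split; [|split]]].
  - rewrite !app_nil_iff, !map_nil_iff. tauto.
  - rewrite !app_nil_iff, !map_nil_iff. intros [E1 E2] [E3 E4]. rewrite TA, TB; auto.
  - lra.
  - intros y Hy. apply in_app_iff in Hy. destruct Hy as [Hy|Hy]; apply in_map_iff in Hy; destruct Hy as [x [<- Hx]].
    + apply IHL; auto.
    + apply IHM; auto.
  - intros y Hy. apply in_app_iff in Hy. destruct Hy as [Hy|Hy]; apply in_map_iff in Hy; destruct Hy as [x [<- Hx]].
    + apply IHR; auto.
    + apply IHN; auto.
Qed.


Definition monoLip (Lf Rf : R -> R) := forall s t, 0 <= s -> s <= t ->
  Lf t <= Lf s /\ Lf s <= Lf t + (t - s) /\ Rf s <= Rf t /\ Rf t <= Rf s + (t - s).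

Lemma min_root (f : R -> R) : 0 <= f 0 ->
  (forall s t, 0 <= s -> s <= t -> f t <= f s /\ f s <= f t + 2 * (t - s)) ->
  (exists K, 0 <= K /\ f K <= 0) ->
  exists t0, 0 <= t0 /\ f t0 = 0 /\ (forall t, 0 <= t -> f t = 0 -> t0 <= t).
Proof.
  intros H0 Hm [K [HK0 HK]].
  destruct (Req_dec (f 0) 0) as [E0|E0].
  { exists 0. split; [lra|split; auto]. }
  set (E := fun t => 0 <= t /\ f t > 0).
  assert (Hb : bound E).
  { exists K. intros t [Ht Hf]. destruct (Rle_dec t K) as [|n]; auto.
    destruct (Hm K t HK0 ltac:(lra)). lra. }
  assert (Hex : exists x, E x) by (exists 0; split; lra).
  destruct (completeness E Hb Hex) as [m [Hub Hlub]].
  assert (Hm0 : 0 <= m) by (apply Hub; split; lra).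
  assert (Hle : f m <= 0).
  { destruct (Rle_dec (f m) 0) as [|n]; auto. exfalso.
    set (t' := m + f m / 4).
    destruct (Hm m t' Hm0 ltac:(unfold t'; lra)) as [_ A].
    assert (E t') by (split; unfold t' in *; lra).
    specialize (Hub t' H). unfold t' in Hub. lra. }
  assert (Hge : 0 <= f m).
  { destruct (Rle_dec 0 (f m)) as [|n]; auto. exfalso.
    set (eps := - f m / 4).
    destruct (classic (exists e, E e /\ m - eps < e)) as [[e [[He1 He2] He3]]|Hn].
    - assert (e <= m) by (apply Hub; split; auto).
      destruct (Hm e m He1 H) as [_ A]. unfold eps in *. lra.
    - assert (m <= m - eps).
      { apply Hlub. intros e He. destruct (Rle_dec e (m - eps)) as [|n2]; auto.
        exfalso; apply Hn; exists e; split; auto; lra. }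
      unfold eps in *; lra. }
  exists m. split; [auto|split; [lra|]].
  intros t Ht Hft. apply Hlub. intros e [He1 He2].
  destruct (Rle_dec e t) as [|n]; auto. destruct (Hm t e Ht ltac:(lra)). lra.
Qed.

Lemma Rs_le_mem a L b Rl y x : In y Rl -> Ls y <= x -> Rs (Gm a L b Rl) <= x.
Proof. intros H1 H2. pose proof (Rs_lb a L b Rl y H1). lra. Qed.
Lemma Ls_ge_mem a L b Rl y x : In y L -> x <= Rs y -> x <= Ls (Gm a L b Rl).
Proof. intros H1 H2. pose proof (Ls_ub a L b Rl y H1). lra. Qed.

Lemma Rs_shift_num X c : Rs (gadd X (num c)) = Rs X + c. Proof. apply sh1. Qed.
Lemma Ls_shift_num X c : Ls (gadd X (num c)) = Ls X + c. Proof. apply sh1. Qed.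

Lemma tilde_monoLip a L b Rl :
  (forall g, In g L -> monoLip (fun t => Ls (cool g t)) (fun t => Rs (cool g t))) ->
  (forall g, In g Rl -> monoLip (fun t => Ls (cool g t)) (fun t => Rs (cool g t))) ->
  monoLip (fun t => Ls (tilde (Gm a L b Rl) t)) (fun t => Rs (tilde (Gm a L b Rl) t)).
Proof.
  intros HL HR s t Hs Hst. rewrite !tilde_unfold. split; [|split; [|split]].
  - apply Ls_le.
    + intros E. apply map_nil_iff in E. subst L. cbn [map]. rewrite Ls_nil. lra.
    + intros y Hy. apply in_map_iff in Hy. destruct Hy as [g [<- Hg]].
      rewrite Rs_shift_num. destruct (HL g Hg s t Hs Hst) as (_&_&_&A).
      apply (Ls_ge_mem _ _ _ _ (gadd (cool g s) (num (- s)))).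
      * apply in_map_iff. exists g; auto.
      * rewrite Rs_shift_num. lra.
  - apply Ls_le.
    + intros E. apply map_nil_iff in E. subst L. cbn [map]. rewrite Ls_nil. lra.
    + intros y Hy. apply in_map_iff in Hy. destruct Hy as [g [<- Hg]].
      rewrite Rs_shift_num. destruct (HL g Hg s t Hs Hst) as (_&_&A&_).
      assert (Rs (cool g t) + - t <= Ls (Gm a (map (fun g0 => gadd (cool g0 t) (num (- t))) L) b
                (map (fun g0 => gadd (cool g0 t) (num t)) Rl))).
      { apply (Ls_ge_mem _ _ _ _ (gadd (cool g t) (num (- t)))).
        * apply in_map_iff. exists g; auto.
        * rewrite Rs_shift_num. lra. }
      lra.
  - apply Rs_ge.
    + intros E. apply map_nil_iff in E. subst Rl. rewrite Rs_nil. lra.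
    + intros y Hy. apply in_map_iff in Hy. destruct Hy as [g [<- Hg]].
      rewrite Ls_shift_num. destruct (HR g Hg s t Hs Hst) as (_&A&_&_).
      apply (Rs_le_mem _ _ _ _ (gadd (cool g s) (num s))).
      * apply in_map_iff. exists g; auto.
      * rewrite Ls_shift_num. lra.
  - destruct Rl as [|r0 rs].
    + cbn [map]. rewrite !Rs_nil. lra.
    + destruct (Rs_att a (map (fun g0 => gadd (cool g0 s) (num (- s))) L) b
                (map (fun g0 => gadd (cool g0 s) (num s)) (r0 :: rs))) as [y [Hy E]]; [discriminate|].
      rewrite E. apply in_map_iff in Hy. destruct Hy as [g [<- Hg]].
      rewrite Ls_shift_num. destruct (HR g Hg s t Hs Hst) as (A&_&_&_).
      apply (Rs_le_mem _ _ _ _ (gadd (cool g t) (num t))).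
      * apply in_map_iff. exists g; auto.
      * rewrite Ls_shift_num. lra.
Qed.


Lemma good_nz X : good X -> Rs X <= Ls X.
Proof. destruct X as [a L b Rl]. intros H. apply good_iff in H. tauto. Qed.

Lemma list_bound (h : game -> R) (l : list game) : exists K, forall g, In g l -> h g <= K.
Proof.
  induction l as [|x xs [K HK]].
  - exists 0. intros g [].
  - exists (Rmax (h x) K). intros g [<-|Hg]. apply Rmax_l. eapply Rle_trans; [apply HK; auto|apply Rmax_r].
Qed.

Lemma isnum_cases a L b Rl : good (Gm a L b Rl) ->
  (L = nil /\ Rl = nil /\ a = b /\ isnum (Gm a L b Rl) = true) \/ (L <> nil /\ Rl <> nil /\ isnum (Gm a L b Rl) = false).
Proof.
  intros G. apply good_iff in G. destruct G as [D [T _]].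
  destruct L as [|l ls]; destruct Rl as [|r rs].
  - left. assert (a = b) by auto. subst. split; [auto|split; [auto|split; [auto|]]]. simpl. destruct (Req_EM_T b b); congruence.
  - exfalso. assert (r :: rs = nil) by (apply D; auto). discriminate.
  - exfalso. assert (l :: ls = nil) by (apply D; auto). discriminate.
  - right. split; [discriminate|split; [discriminate|reflexivity]].
Qed.

Lemma is_tmin_unique f t1 t2 : is_tmin f t1 -> is_tmin f t2 -> t1 = t2.
Proof.
  intros [A1 [B1 C1]] [A2 [B2 C2]]. apply Rle_antisym; [apply C1|apply C2]; auto.
Qed.

Lemma sig_spec X t0 : is_tmin (tilde X) t0 -> is_tmin (tilde X) (sig X).
Proof.
  intros H. unfold sig, tmin. apply epsilon_spec. exists t0; auto.
Qed.

Definition CT (X : game) : Prop :=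
  is_tmin (tilde X) (sig X) /\
  (forall t, 0 <= t -> good (cool X t)) /\
  monoLip (fun t => Ls (cool X t)) (fun t => Rs (cool X t)) /\
  Ls (cool X 0) = Ls X /\ Rs (cool X 0) = Rs X /\
  (forall t, cool X t = if Rle_dec t (sig X) then tilde X t else num (Ls (tilde X (sig X)))) /\
  monoLip (fun t => Ls (tilde X t)) (fun t => Rs (tilde X t)).

Lemma Rmin_facts s t sg : 0 <= s -> s <= t -> 0 <= sg ->
  0 <= Rmin s sg /\ Rmin s sg <= Rmin t sg /\ Rmin t sg - Rmin s sg <= t - s.
Proof. intros. unfold Rmin. destruct (Rle_dec s sg); destruct (Rle_dec t sg); lra. Qed.

Lemma CT_all X : good X -> CT X.
Proof.
  induction X as [a L b Rl IHL IHR] using game_ind2. intros GX.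
  pose proof GX as GX'. apply good_iff in GX'. destruct GX' as [DX [TX [NX [GL GR]]]].
  assert (CL : forall g, In g L -> CT g) by (intros; apply IHL; auto).
  assert (CR : forall g, In g Rl -> CT g) by (intros; apply IHR; auto).
  clear IHL IHR.
  assert (ML : monoLip (fun t => Ls (tilde (Gm a L b Rl) t)) (fun t => Rs (tilde (Gm a L b Rl) t))).
  { apply tilde_monoLip; intros g Hg; [apply CL|apply CR]; auto. }
  assert (T0 : Ls (tilde (Gm a L b Rl) 0) = Ls (Gm a L b Rl) /\ Rs (tilde (Gm a L b Rl) 0) = Rs (Gm a L b Rl)).
  { rewrite tilde_unfold. split.
    - rewrite (Ls_map1 _ a L b _ a b Rl 0). lra. intros; lra.
      intros g Hg. rewrite Rs_shift_num. destruct (CL g Hg) as (_&_&_&_&E&_). rewrite E. lra.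
    - rewrite (Rs_map1 _ a _ b Rl a L b 0). lra. intros; lra.
      intros g Hg. rewrite Ls_shift_num. destruct (CR g Hg) as (_&_&_&E&_). rewrite E. lra. }
  assert (EX : exists t0, is_tmin (tilde (Gm a L b Rl)) t0).
  { destruct (isnum_cases a L b Rl GX) as [(E1&E2&E3&_)|(E1&E2&_)].
    - subst L Rl b. exists 0. unfold is_tmin. rewrite tilde_unfold. cbn [map].
      rewrite Ls_nil, Rs_nil. split; [lra|split; [auto|]]. intros; lra.
    - destruct (list_bound (fun g => Ls g) L) as [K1 HK1].
      destruct (list_bound (fun g => - Rs g) Rl) as [K2 HK2].
      assert (UB : forall t, 0 <= t -> Ls (tilde (Gm a L b Rl) t) <= K1 - t).
      { intros t Ht. rewrite tilde_unfold. apply Ls_le.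
        - intros E. apply map_nil_iff in E. contradiction.
        - intros y Hy. apply in_map_iff in Hy. destruct Hy as [g [<- Hg]]. rewrite Rs_shift_num.
          destruct (CL g Hg) as (_&G1&M1&E1'&_).
          pose proof (good_nz _ (G1 t Ht)). destruct (M1 0 t ltac:(lra) Ht) as (A&_).
          specialize (HK1 g Hg). simpl in HK1. lra. }
      assert (LB : forall t, 0 <= t -> - K2 + t <= Rs (tilde (Gm a L b Rl) t)).
      { intros t Ht. rewrite tilde_unfold. apply Rs_ge.
        - intros E. apply map_nil_iff in E. contradiction.
        - intros y Hy. apply in_map_iff in Hy. destruct Hy as [g [<- Hg]]. rewrite Ls_shift_num.
          destruct (CR g Hg) as (_&G1&M1&_&E1'&_).
          pose proof (good_nz _ (G1 t Ht)). destruct (M1 0 t ltac:(lra) Ht) as (_&_&A&_).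
          specialize (HK2 g Hg). simpl in HK2. lra. }
      destruct (min_root (fun t => Ls (tilde (Gm a L b Rl) t) - Rs (tilde (Gm a L b Rl) t))) as [t0 [A [B C]]].
      + destruct T0 as [T01 T02]. cbv beta. rewrite T01, T02. lra.
      + intros s t Hs Hst. destruct (ML s t Hs Hst) as (m1&m2&m3&m4). cbv beta in *; cbv beta. lra.
      + exists (Rabs K1 + Rabs K2 + 1). pose proof (Rle_abs K1). pose proof (Rle_abs K2).
        pose proof (Rabs_pos K1). pose proof (Rabs_pos K2).
        split; [lra|]. specialize (UB (Rabs K1 + Rabs K2 + 1) ltac:(lra)).
        specialize (LB (Rabs K1 + Rabs K2 + 1) ltac:(lra)). lra.
      + exists t0. cbv beta in B. split; auto. split; [lra|]. intros t Ht Et. apply C; auto. cbv beta. lra. }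
  destruct EX as [t0 EX]. pose proof (sig_spec _ _ EX) as TM. destruct TM as (S0&S1&S2).
  assert (CE : forall t, cool (Gm a L b Rl) t = if Rle_dec t (sig (Gm a L b Rl)) then tilde (Gm a L b Rl) t
                                  else num (Ls (tilde (Gm a L b Rl) (sig (Gm a L b Rl))))).
  { intros t. rewrite cool_unfold. destruct (isnum_cases a L b Rl GX) as [(E1&E2&E3&E4)|(E1&E2&E4)].
    - rewrite E4. subst L Rl b. destruct (Rle_dec _ _); reflexivity.
    - rewrite E4. reflexivity. }
  assert (CLs : forall t, Ls (cool (Gm a L b Rl) t) = Ls (tilde (Gm a L b Rl) (Rmin t (sig (Gm a L b Rl)))) /\
                          Rs (cool (Gm a L b Rl) t) = Rs (tilde (Gm a L b Rl) (Rmin t (sig (Gm a L b Rl))))).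
  { intros t. rewrite CE. destruct (Rle_dec _ _) as [h|h].
    - rewrite Rmin_left; auto.
    - rewrite Rmin_right by lra. unfold num. rewrite Ls_nil, Rs_nil. auto. }
  split; [split; [exact S0|split; [exact S1|exact S2]]|]. split; [|split; [|split; [|split; [|split]]]].
  - intros t Ht. rewrite CE. destruct (Rle_dec _ _) as [h|h]; [|apply good_num].
    assert (NZ : Rs (tilde (Gm a L b Rl) t) <= Ls (tilde (Gm a L b Rl) t)).
    { destruct (ML t _ Ht h) as (m1&_&m3&_). cbv beta in *. lra. }
    rewrite tilde_unfold in *. apply good_iff. split; [|split; [|split; [|split]]].
    + rewrite !map_nil_iff; auto.
    + rewrite !map_nil_iff; auto.
    + exact NZ.
    + intros y Hy. apply in_map_iff in Hy. destruct Hy as [g [<- Hg]].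
      apply good_sum; [|apply good_num]. destruct (CL g Hg) as (_&G1&_). auto.
    + intros y Hy. apply in_map_iff in Hy. destruct Hy as [g [<- Hg]].
      apply good_sum; [|apply good_num]. destruct (CR g Hg) as (_&G1&_). auto.
  - intros s t Hs Hst. destruct (CLs s) as [Ls1 Rs1]. destruct (CLs t) as [Ls2 Rs2].
    rewrite Ls1, Rs1, Ls2, Rs2.
    destruct (Rmin_facts s t _ Hs Hst S0) as (r1&r2&r3).
    destruct (ML _ _ r1 r2) as (m1&m2&m3&m4). lra.
  - rewrite CE. destruct (Rle_dec _ _); [apply T0|lra].
  - rewrite CE. destruct (Rle_dec _ _); [apply T0|lra].
  - exact CE.
  - exact ML.
Qed.

Lemma temperature_sig X : good X -> temperature X = sig X.
Proof.
  destruct X as [a L b Rl]. intros GX. unfold temperature.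
  destruct (isnum_cases a L b Rl GX) as [(E1&E2&E3&E4)|(E1&E2&E4)].
  - rewrite E4. destruct (CT_all _ GX) as (S&_). subst L Rl b.
    apply (is_tmin_unique (tilde (Gm a nil a nil))); auto.
    unfold is_tmin. rewrite tilde_unfold. cbn [map]. rewrite Ls_nil, Rs_nil. split; [lra|split; [auto|]]. intros; lra.
  - rewrite E4. reflexivity.
Qed.


Definition Lo X := match X with Gm _ L _ _ => L end.
Definition Ro X := match X with Gm _ _ _ R => R end.
Definition Ld X := match X with Gm a _ _ _ => a end.
Definition Rd X := match X with Gm _ _ b _ => b end.

Lemma game_eta X : X = Gm (Ld X) (Lo X) (Rd X) (Ro X). Proof. destruct X; reflexivity. Qed.
Lemma Lo_gadd X Y : Lo (gadd X Y) = map (fun g => gadd g Y) (Lo X) ++ map (fun h => gadd X h) (Lo Y).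
Proof. destruct X, Y; reflexivity. Qed.
Lemma Ro_gadd X Y : Ro (gadd X Y) = map (fun g => gadd g Y) (Ro X) ++ map (fun h => gadd X h) (Ro Y).
Proof. destruct X, Y; reflexivity. Qed.
Lemma Ld_gadd X Y : Ld (gadd X Y) = Ld X + Ld Y. Proof. destruct X, Y; reflexivity. Qed.
Lemma Rd_gadd X Y : Rd (gadd X Y) = Rd X + Rd Y. Proof. destruct X, Y; reflexivity. Qed.
Lemma Lo_tilde X t : Lo (tilde X t) = map (fun g => gadd (cool g t) (num (- t))) (Lo X). Proof. destruct X; reflexivity. Qed.
Lemma Ro_tilde X t : Ro (tilde X t) = map (fun g => gadd (cool g t) (num t)) (Ro X). Proof. destruct X; reflexivity. Qed.
Lemma Ld_tilde X t : Ld (tilde X t) = Ld X. Proof. destruct X; reflexivity. Qed.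
Lemma Rd_tilde X t : Rd (tilde X t) = Rd X. Proof. destruct X; reflexivity. Qed.

Lemma Ls_ub' X y : In y (Lo X) -> Rs y <= Ls X.
Proof. destruct X; apply Ls_ub. Qed.
Lemma Rs_lb' X y : In y (Ro X) -> Rs X <= Ls y.
Proof. destruct X; apply Rs_lb. Qed.
Lemma Ls_le' X x : (Lo X = nil -> Ld X <= x) -> (forall y, In y (Lo X) -> Rs y <= x) -> Ls X <= x.
Proof. destruct X; apply Ls_le. Qed.
Lemma Rs_ge' X x : (Ro X = nil -> x <= Rd X) -> (forall y, In y (Ro X) -> x <= Ls y) -> x <= Rs X.
Proof. destruct X; apply Rs_ge. Qed.
Lemma Ls_att' X : Lo X <> nil -> exists y, In y (Lo X) /\ Ls X = Rs y.
Proof. destruct X; apply Ls_att. Qed.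
Lemma Rs_att' X : Ro X <> nil -> exists y, In y (Ro X) /\ Rs X = Ls y.
Proof. destruct X; apply Rs_att. Qed.

Lemma good_opt X x : good X -> In x (Lo X) \/ In x (Ro X) -> good x.
Proof. destruct X as [a L b Rl]. intros G. apply good_iff in G. simpl. firstorder. Qed.

Lemma in_Lo_tS G H t y : In y (Lo (tilde (gadd G H) t)) <->
  (exists x, In x (Lo G) /\ y = gadd (cool (gadd x H) t) (num (- t))) \/
  (exists z, In z (Lo H) /\ y = gadd (cool (gadd G z) t) (num (- t))).
Proof.
  rewrite Lo_tilde, Lo_gadd, map_app, !map_map, in_app_iff, !in_map_iff.
  split; intros [[x [E Hx]]|[x [E Hx]]]; [left|right|left|right]; exists x; auto.
Qed.
Lemma in_Ro_tS G H t y : In y (Ro (tilde (gadd G H) t)) <->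
  (exists x, In x (Ro G) /\ y = gadd (cool (gadd x H) t) (num t)) \/
  (exists z, In z (Ro H) /\ y = gadd (cool (gadd G z) t) (num t)).
Proof.
  rewrite Ro_tilde, Ro_gadd, map_app, !map_map, in_app_iff, !in_map_iff.
  split; intros [[x [E Hx]]|[x [E Hx]]]; [left|right|left|right]; exists x; auto.
Qed.
Lemma in_Lo_t X t y : In y (Lo (tilde X t)) <-> exists x, In x (Lo X) /\ y = gadd (cool x t) (num (- t)).
Proof. rewrite Lo_tilde, in_map_iff. split; intros [x [E Hx]]; exists x; auto. Qed.
Lemma in_Ro_t X t y : In y (Ro (tilde X t)) <-> exists x, In x (Ro X) /\ y = gadd (cool x t) (num t).
Proof. rewrite Ro_tilde, in_map_iff. split; intros [x [E Hx]]; exists x; auto. Qed.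

Lemma sig_pos_opts X : good X -> 0 < sig X -> Lo X <> nil /\ Ro X <> nil.
Proof.
  destruct X as [a L b Rl]. intros GX Hs. rewrite <- (temperature_sig _ GX) in Hs.
  unfold temperature in Hs. destruct (isnum_cases a L b Rl GX) as [(E1&E2&E3&E4)|(E1&E2&E4)].
  - rewrite E4 in Hs. lra.
  - simpl; auto.
Qed.

Lemma Ls_corr X Y c :
  (Lo X = nil <-> Lo Y = nil) -> (Lo X = nil -> Ld X = Ld Y + c) ->
  (forall y, In y (Lo X) -> exists y', In y' (Lo Y) /\ Rs y = Rs y' + c) ->
  (forall y', In y' (Lo Y) -> exists y, In y (Lo X) /\ Rs y = Rs y' + c) ->
  Ls X = Ls Y + c.
Proof. destruct X, Y; apply Ls_shift. Qed.
Lemma Rs_corr X Y c :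
  (Ro X = nil <-> Ro Y = nil) -> (Ro X = nil -> Rd X = Rd Y + c) ->
  (forall y, In y (Ro X) -> exists y', In y' (Ro Y) /\ Ls y = Ls y' + c) ->
  (forall y', In y' (Ro Y) -> exists y, In y (Ro X) /\ Ls y = Ls y' + c) ->
  Rs X = Rs Y + c.
Proof. destruct X, Y; apply Rs_shift. Qed.

Lemma Ls_map2' X Y (f1 f2 g1 g2 : game -> game) L1 L2 c :
  Lo X = map f1 L1 ++ map f2 L2 -> Lo Y = map g1 L1 ++ map g2 L2 ->
  (L1 = nil -> L2 = nil -> Ld X = Ld Y + c) ->
  (forall x, In x L1 -> Rs (f1 x) = Rs (g1 x) + c) ->
  (forall x, In x L2 -> Rs (f2 x) = Rs (g2 x) + c) -> Ls X = Ls Y + c.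
Proof.
  intros HX HY H0 H1 H2.
  transitivity (Ls (Gm (Ld X) (Lo X) (Rd X) (Ro X))); [destruct X; reflexivity|].
  transitivity (Ls (Gm (Ld Y) (Lo Y) (Rd Y) (Ro Y)) + c); [|destruct Y; reflexivity].
  rewrite HX, HY. apply Ls_map2; auto.
Qed.
Lemma Rs_map2' X Y (f1 f2 g1 g2 : game -> game) L1 L2 c :
  Ro X = map f1 L1 ++ map f2 L2 -> Ro Y = map g1 L1 ++ map g2 L2 ->
  (L1 = nil -> L2 = nil -> Rd X = Rd Y + c) ->
  (forall x, In x L1 -> Ls (f1 x) = Ls (g1 x) + c) ->
  (forall x, In x L2 -> Ls (f2 x) = Ls (g2 x) + c) -> Rs X = Rs Y + c.
Proof.
  intros HX HY H0 H1 H2.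
  transitivity (Rs (Gm (Ld X) (Lo X) (Rd X) (Ro X))); [destruct X; reflexivity|].
  transitivity (Rs (Gm (Ld Y) (Lo Y) (Rd Y) (Ro Y)) + c); [|destruct Y; reflexivity].
  rewrite HX, HY. apply Rs_map2; auto.
Qed.

Definition IHpair G H :=
  (forall x, In x (Lo G) \/ In x (Ro G) -> forall t, 0 <= t ->
     Ls (cool (gadd x H) t) = Ls (gadd (cool x t) (cool H t)) /\
     Rs (cool (gadd x H) t) = Rs (gadd (cool x t) (cool H t))) /\
  (forall z, In z (Lo H) \/ In z (Ro H) -> forall t, 0 <= t ->
     Ls (cool (gadd G z) t) = Ls (gadd (cool G t) (cool z t)) /\
     Rs (cool (gadd G z) t) = Rs (gadd (cool G t) (cool z t))).

Lemma K1A G H t : good G -> good H -> IHpair G H -> 0 <= t -> t <= sig G -> t <= sig H ->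
  Ls (tilde (gadd G H) t) = Ls (gadd (cool G t) (cool H t)) /\
  Rs (tilde (gadd G H) t) = Rs (gadd (cool G t) (cool H t)).
Proof.
  intros GG GH [IHG IHH] Ht HtG HtH.
  destruct (CT_all G GG) as (_&_&_&_&_&CEG&_).
  destruct (CT_all H GH) as (_&_&_&_&_&CEH&_).
  assert (cG : cool G t = tilde G t) by (rewrite CEG; destruct (Rle_dec _ _); [auto|lra]).
  assert (cH : cool H t = tilde H t) by (rewrite CEH; destruct (Rle_dec _ _); [auto|lra]).
  rewrite cG, cH. split.
  - replace (Ls (gadd (tilde G t) (tilde H t))) with (Ls (gadd (tilde G t) (tilde H t)) + 0) by ring.
    apply (Ls_map2' _ _ (fun x => gadd (cool (gadd x H) t) (num (- t))) (fun z => gadd (cool (gadd G z) t) (num (- t)))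
             (fun x => gadd (gadd (cool x t) (num (- t))) (tilde H t)) (fun z => gadd (tilde G t) (gadd (cool z t) (num (- t))))
             (Lo G) (Lo H)).
    + rewrite Lo_tilde, Lo_gadd, map_app, !map_map. reflexivity.
    + rewrite Lo_gadd, !Lo_tilde, !map_map. reflexivity.
    + intros. rewrite Ld_tilde, !Ld_gadd, !Ld_tilde. ring.
    + intros x Hx. rewrite Rs_shift_num. destruct (IHG x (or_introl Hx) t Ht) as [_ E]. rewrite E, cH.
      destruct (sh2 (cool x t) (tilde H t) (- t)) as [_ E2]. rewrite E2. ring.
    + intros z Hz. rewrite Rs_shift_num. destruct (IHH z (or_introl Hz) t Ht) as [_ E]. rewrite E, cG.
      destruct (sh3 (tilde G t) (cool z t) (- t)) as [_ E2]. rewrite E2. ring.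
  - replace (Rs (gadd (tilde G t) (tilde H t))) with (Rs (gadd (tilde G t) (tilde H t)) + 0) by ring.
    apply (Rs_map2' _ _ (fun x => gadd (cool (gadd x H) t) (num t)) (fun z => gadd (cool (gadd G z) t) (num t))
             (fun x => gadd (gadd (cool x t) (num t)) (tilde H t)) (fun z => gadd (tilde G t) (gadd (cool z t) (num t)))
             (Ro G) (Ro H)).
    + rewrite Ro_tilde, Ro_gadd, map_app, !map_map. reflexivity.
    + rewrite Ro_gadd, !Ro_tilde, !map_map. reflexivity.
    + intros. rewrite Rd_tilde, !Rd_gadd, !Rd_tilde. ring.
    + intros x Hx. rewrite Ls_shift_num. destruct (IHG x (or_intror Hx) t Ht) as [E _]. rewrite E, cH.
      destruct (sh2 (cool x t) (tilde H t) t) as [E2 _]. rewrite E2. ring.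
    + intros z Hz. rewrite Ls_shift_num. destruct (IHH z (or_intror Hz) t Ht) as [E _]. rewrite E, cG.
      destruct (sh3 (tilde G t) (cool z t) t) as [E2 _]. rewrite E2. ring.
Qed.

Lemma K1B G H t : good G -> good H -> IHpair G H -> 0 <= t -> sig G < t -> t <= sig H ->
  Ls (tilde (gadd G H) t) = Ls (gadd (cool G t) (cool H t)) /\
  Rs (tilde (gadd G H) t) = Rs (gadd (cool G t) (cool H t)).
Proof.
  intros GG GH [IHG IHH] Ht HtG HtH.
  destruct (CT_all G GG) as ((SG0&SG1&SG2)&GcG&_&_&_&CEG&MTG).
  destruct (CT_all H GH) as ((SH0&SH1&SH2)&GcH&_&_&_&CEH&MTH).
  set (g := Ls (tilde G (sig G))).
  assert (cG : cool G t = num g) by (rewrite CEG; destruct (Rle_dec _ _); [lra|auto]).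
  assert (cH : cool H t = tilde H t) by (rewrite CEH; destruct (Rle_dec _ _); [auto|lra]).
  destruct (sig_pos_opts H GH ltac:(lra)) as [HLn HRn].
  assert (GtH : good (tilde H t)) by (rewrite <- cH; auto).
  destruct (MTG (sig G) t SG0 ltac:(lra)) as (mg1&_&mg3&_). cbv beta in mg1, mg3.
  assert (LTG : forall x, In x (Lo G) -> Rs (cool x t) + - t <= g).
  { intros x Hx. rewrite <- Rs_shift_num.
    assert (Rs (gadd (cool x t) (num (- t))) <= Ls (tilde G t)) by (apply Ls_ub'; apply in_Lo_t; exists x; auto).
    unfold g; lra. }
  assert (RTG : forall x, In x (Ro G) -> g <= Ls (cool x t) + t).
  { intros x Hx. rewrite <- Ls_shift_num.
    assert (Rs (tilde G t) <= Ls (gadd (cool x t) (num t))) by (apply Rs_lb'; apply in_Ro_t; exists x; auto).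
    unfold g; lra. }
  rewrite cG, cH. destruct (sh1l (tilde H t) g) as [E1 E2]. rewrite E1, E2. split; apply Rle_antisym.
  - apply Ls_le'.
    + intros E. rewrite Lo_tilde, Lo_gadd, map_app, app_nil_iff, !map_nil_iff in E. tauto.
    + intros y Hy. apply in_Lo_tS in Hy. destruct Hy as [[x [Hx ->]]|[z [Hz ->]]].
      * rewrite Rs_shift_num. destruct (IHG x (or_introl Hx) t Ht) as [_ E]. rewrite E, cH.
        assert (Gx : good x) by (apply (good_opt G); auto).
        destruct (CT_all x Gx) as (_&Gcx&_).
        destruct (ineqs (cool x t) (tilde H t) (Gcx t Ht) GtH) as (_&I2&_).
        specialize (LTG x Hx). lra.
      * rewrite Rs_shift_num. destruct (IHH z (or_introl Hz) t Ht) as [_ E]. rewrite E, cG.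
        destruct (sh1l (cool z t) g) as [_ E3]. rewrite E3.
        assert (Rs (gadd (cool z t) (num (- t))) <= Ls (tilde H t)) by (apply Ls_ub'; apply in_Lo_t; exists z; auto).
        rewrite Rs_shift_num in H0. lra.
  - destruct (Ls_att' (tilde H t)) as [y [Hy Ey]].
    { rewrite Lo_tilde. intros E; apply map_nil_iff in E; auto. }
    apply in_Lo_t in Hy. destruct Hy as [z [Hz ->]]. rewrite Ey, Rs_shift_num.
    assert (Rs (gadd (cool (gadd G z) t) (num (- t))) <= Ls (tilde (gadd G H) t)).
    { apply Ls_ub'. apply in_Lo_tS. right. exists z; auto. }
    rewrite Rs_shift_num in H0. destruct (IHH z (or_introl Hz) t Ht) as [_ E]. rewrite E, cG in H0.
    destruct (sh1l (cool z t) g) as [_ E3]. rewrite E3 in H0. lra.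
  - destruct (Rs_att' (tilde H t)) as [y [Hy Ey]].
    { rewrite Ro_tilde. intros E; apply map_nil_iff in E; auto. }
    apply in_Ro_t in Hy. destruct Hy as [z [Hz ->]]. rewrite Ey, Ls_shift_num.
    assert (Rs (tilde (gadd G H) t) <= Ls (gadd (cool (gadd G z) t) (num t))).
    { apply Rs_lb'. apply in_Ro_tS. right. exists z; auto. }
    rewrite Ls_shift_num in H0. destruct (IHH z (or_intror Hz) t Ht) as [E _]. rewrite E, cG in H0.
    destruct (sh1l (cool z t) g) as [E3 _]. rewrite E3 in H0. lra.
  - apply Rs_ge'.
    + intros E. rewrite Ro_tilde, Ro_gadd, map_app, app_nil_iff, !map_nil_iff in E. tauto.
    + intros y Hy. apply in_Ro_tS in Hy. destruct Hy as [[x [Hx ->]]|[z [Hz ->]]].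
      * rewrite Ls_shift_num. destruct (IHG x (or_intror Hx) t Ht) as [E _]. rewrite E, cH.
        assert (Gx : good x) by (apply (good_opt G); auto).
        destruct (CT_all x Gx) as (_&Gcx&_).
        destruct (ineqs (cool x t) (tilde H t) (Gcx t Ht) GtH) as (_&_&_&_&I4&_).
        specialize (RTG x Hx). lra.
      * rewrite Ls_shift_num. destruct (IHH z (or_intror Hz) t Ht) as [E _]. rewrite E, cG.
        destruct (sh1l (cool z t) g) as [E3 _]. rewrite E3.
        assert (Rs (tilde H t) <= Ls (gadd (cool z t) (num t))) by (apply Rs_lb'; apply in_Ro_t; exists z; auto).
        rewrite Ls_shift_num in H0. lra.
Qed.

Lemma K1C G H t : good G -> good H -> IHpair G H -> 0 <= t -> sig H < t -> t <= sig G ->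
  Ls (tilde (gadd G H) t) = Ls (gadd (cool G t) (cool H t)) /\
  Rs (tilde (gadd G H) t) = Rs (gadd (cool G t) (cool H t)).
Proof.
  intros GG GH [IHG IHH] Ht HtH HtG.
  destruct (CT_all G GG) as ((SG0&SG1&SG2)&GcG&_&_&_&CEG&MTG).
  destruct (CT_all H GH) as ((SH0&SH1&SH2)&GcH&_&_&_&CEH&MTH).
  set (h := Ls (tilde H (sig H))).
  assert (cH : cool H t = num h) by (rewrite CEH; destruct (Rle_dec _ _); [lra|auto]).
  assert (cG : cool G t = tilde G t) by (rewrite CEG; destruct (Rle_dec _ _); [auto|lra]).
  destruct (sig_pos_opts G GG ltac:(lra)) as [GLn GRn].
  assert (GtG : good (tilde G t)) by (rewrite <- cG; auto).
  destruct (MTH (sig H) t SH0 ltac:(lra)) as (mh1&_&mh3&_). cbv beta in mh1, mh3.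
  assert (LTH : forall z, In z (Lo H) -> Rs (cool z t) + - t <= h).
  { intros z Hz. rewrite <- Rs_shift_num.
    assert (Rs (gadd (cool z t) (num (- t))) <= Ls (tilde H t)) by (apply Ls_ub'; apply in_Lo_t; exists z; auto).
    unfold h; lra. }
  assert (RTH : forall z, In z (Ro H) -> h <= Ls (cool z t) + t).
  { intros z Hz. rewrite <- Ls_shift_num.
    assert (Rs (tilde H t) <= Ls (gadd (cool z t) (num t))) by (apply Rs_lb'; apply in_Ro_t; exists z; auto).
    unfold h; lra. }
  rewrite cG, cH. destruct (sh1 (tilde G t) h) as [E1 E2]. rewrite E1, E2. split; apply Rle_antisym.
  - apply Ls_le'.
    + intros E. rewrite Lo_tilde, Lo_gadd, map_app, app_nil_iff, !map_nil_iff in E. tauto.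
    + intros y Hy. apply in_Lo_tS in Hy. destruct Hy as [[x [Hx ->]]|[z [Hz ->]]].
      * rewrite Rs_shift_num. destruct (IHG x (or_introl Hx) t Ht) as [_ E]. rewrite E, cH.
        destruct (sh1 (cool x t) h) as [_ E3]. rewrite E3.
        assert (Rs (gadd (cool x t) (num (- t))) <= Ls (tilde G t)) by (apply Ls_ub'; apply in_Lo_t; exists x; auto).
        rewrite Rs_shift_num in H0. lra.
      * rewrite Rs_shift_num. destruct (IHH z (or_introl Hz) t Ht) as [_ E]. rewrite E, cG.
        assert (Gz : good z) by (apply (good_opt H); auto).
        destruct (CT_all z Gz) as (_&Gcz&_).
        destruct (ineqs (tilde G t) (cool z t) GtG (Gcz t Ht)) as (_&_&I2b&_).
        specialize (LTH z Hz). lra.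
  - destruct (Ls_att' (tilde G t)) as [y [Hy Ey]].
    { rewrite Lo_tilde. intros E; apply map_nil_iff in E; auto. }
    apply in_Lo_t in Hy. destruct Hy as [x [Hx ->]]. rewrite Ey, Rs_shift_num.
    assert (Rs (gadd (cool (gadd x H) t) (num (- t))) <= Ls (tilde (gadd G H) t)).
    { apply Ls_ub'. apply in_Lo_tS. left. exists x; auto. }
    rewrite Rs_shift_num in H0. destruct (IHG x (or_introl Hx) t Ht) as [_ E]. rewrite E, cH in H0.
    destruct (sh1 (cool x t) h) as [_ E3]. rewrite E3 in H0. lra.
  - destruct (Rs_att' (tilde G t)) as [y [Hy Ey]].
    { rewrite Ro_tilde. intros E; apply map_nil_iff in E; auto. }
    apply in_Ro_t in Hy. destruct Hy as [x [Hx ->]]. rewrite Ey, Ls_shift_num.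
    assert (Rs (tilde (gadd G H) t) <= Ls (gadd (cool (gadd x H) t) (num t))).
    { apply Rs_lb'. apply in_Ro_tS. left. exists x; auto. }
    rewrite Ls_shift_num in H0. destruct (IHG x (or_intror Hx) t Ht) as [E _]. rewrite E, cH in H0.
    destruct (sh1 (cool x t) h) as [E3 _]. rewrite E3 in H0. lra.
  - apply Rs_ge'.
    + intros E. rewrite Ro_tilde, Ro_gadd, map_app, app_nil_iff, !map_nil_iff in E. tauto.
    + intros y Hy. apply in_Ro_tS in Hy. destruct Hy as [[x [Hx ->]]|[z [Hz ->]]].
      * rewrite Ls_shift_num. destruct (IHG x (or_intror Hx) t Ht) as [E _]. rewrite E, cH.
        destruct (sh1 (cool x t) h) as [E3 _]. rewrite E3.
        assert (Rs (tilde G t) <= Ls (gadd (cool x t) (num t))) by (apply Rs_lb'; apply in_Ro_t; exists x; auto).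
        rewrite Ls_shift_num in H0. lra.
      * rewrite Ls_shift_num. destruct (IHH z (or_intror Hz) t Ht) as [E _]. rewrite E, cG.
        assert (Gz : good z) by (apply (good_opt H); auto).
        destruct (CT_all z Gz) as (_&Gcz&_).
        destruct (ineqs (tilde G t) (cool z t) GtG (Gcz t Ht)) as (_&_&_&_&_&I4b).
        specialize (RTH z Hz). lra.
Qed.

Lemma K1 G H t : good G -> good H -> IHpair G H -> 0 <= t -> t <= Rmax (sig G) (sig H) ->
  Ls (tilde (gadd G H) t) = Ls (gadd (cool G t) (cool H t)) /\
  Rs (tilde (gadd G H) t) = Rs (gadd (cool G t) (cool H t)).
Proof.
  intros GG GH IH Ht HM.
  destruct (Rle_dec t (sig G)) as [h1|h1]; destruct (Rle_dec t (sig H)) as [h2|h2].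
  - apply K1A; auto.
  - apply K1C; auto; lra.
  - apply K1B; auto; lra.
  - exfalso. unfold Rmax in HM. destruct (Rle_dec _ _); lra.
Qed.

Definition K1concl G H := forall t, 0 <= t -> t <= Rmax (sig G) (sig H) ->
  Ls (tilde (gadd G H) t) = Ls (gadd (cool G t) (cool H t)) /\
  Rs (tilde (gadd G H) t) = Rs (gadd (cool G t) (cool H t)).

Lemma claim_from_K1 G H : good G -> good H -> K1concl G H ->
  (forall t, 0 <= t -> Ls (cool (gadd G H) t) = Ls (gadd (cool G t) (cool H t)) /\
                       Rs (cool (gadd G H) t) = Rs (gadd (cool G t) (cool H t))) /\
  sig (gadd G H) <= Rmax (sig G) (sig H) /\
  (sig H < sig G -> sig (gadd G H) = sig G) /\
  Ls (cool (gadd G H) (sig (gadd G H))) = Ls (gadd (cool G (sig G)) (cool H (sig H))) /\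
  Rs (cool (gadd G H) (sig (gadd G H))) = Rs (gadd (cool G (sig G)) (cool H (sig H))).
Proof.
  intros GG GH KK. unfold K1concl in KK.
  assert (GS : good (gadd G H)) by (apply good_sum; auto).
  destruct (CT_all G GG) as ((SG0&SG1&SG2)&GcG&_&_&_&CEG&MTG).
  destruct (CT_all H GH) as ((SH0&SH1&SH2)&GcH&_&_&_&CEH&MTH).
  destruct (CT_all _ GS) as ((TS0&TS1&TS2)&GcS&_&_&_&CES&MTS).
  set (sa := sig G) in *. set (sb := sig H) in *. set (T := sig (gadd G H)) in *.
  set (g := Ls (tilde G sa)). set (h := Ls (tilde H sb)).
  set (M := Rmax sa sb).
  assert (HMa : sa <= M) by apply Rmax_l. assert (HMb : sb <= M) by apply Rmax_r.
  assert (FG : forall t, sa <= t -> Ls (cool G t) = g /\ Rs (cool G t) = g).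
  { intros t Ht. rewrite CEG. destruct (Rle_dec _ _).
    - assert (t = sa) by lra. subst t. unfold g. auto.
    - unfold num. rewrite Ls_nil, Rs_nil. auto. }
  assert (FH : forall t, sb <= t -> Ls (cool H t) = h /\ Rs (cool H t) = h).
  { intros t Ht. rewrite CEH. destruct (Rle_dec _ _).
    - assert (t = sb) by lra. subst t. unfold h. auto.
    - unfold num. rewrite Ls_nil, Rs_nil. auto. }
  assert (FGH : forall t, sa <= t -> sb <= t ->
            Ls (gadd (cool G t) (cool H t)) = g + h /\ Rs (gadd (cool G t) (cool H t)) = g + h).
  { intros t Ha Hb. destruct (FG t Ha) as [A1 A2]. destruct (FH t Hb) as [B1 B2].
    destruct (ineqs (cool G t) (cool H t) (GcG t ltac:(lra)) (GcH t ltac:(lra))) as (I1&I2&I2b&I3&I4&I4b).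
    split; lra. }
  assert (M0 : 0 <= M) by lra. destruct (KK M M0 (Rle_refl _)) as [KM1 KM2].
  destruct (FGH M HMa HMb) as [FM1 FM2].
  assert (TM : T <= M) by (apply TS2; lra).
  set (v := Ls (tilde (gadd G H) T)).
  assert (F3 : forall t, T <= t -> t <= M ->
            Ls (gadd (cool G t) (cool H t)) = v /\ Rs (gadd (cool G t) (cool H t)) = v).
  { intros t H1 H2. destruct (KK t ltac:(lra) ltac:(unfold M in *; lra)) as [A1 A2].
    destruct (MTS T t TS0 H1) as (m1&_&m3&_). cbv beta in m1, m3.
    pose proof (good_nz _ (good_sum _ _ (GcG t ltac:(lra)) (GcH t ltac:(lra)))).
    unfold v. split; lra. }
  assert (Ev : v = g + h).
  { destruct (F3 M TM (Rle_refl _)) as [A _]. lra. }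
  split; [|split; [|split]].
  - intros t Ht. rewrite CES. destruct (Rle_dec _ _) as [h1|h1].
    + apply KK; auto. unfold M in *; lra.
    + unfold num. rewrite Ls_nil, Rs_nil. fold v.
      destruct (Rle_dec t M) as [h2|h2].
      * destruct (F3 t ltac:(lra) h2). split; auto.
      * destruct (FGH t ltac:(lra) ltac:(lra)). split; lra.
  - exact TM.
  - intros Hlt. assert (EM : M = sa) by (unfold M; apply Rmax_left; lra).
    destruct (Rle_dec sa T) as [h1|h1]; [lra|]. exfalso.
    set (s := (Rmax T sb + sa) / 2).
    assert (s1 : T < s) by (unfold s; pose proof (Rmax_l T sb); lra).
    assert (s2 : sb < s) by (unfold s; pose proof (Rmax_r T sb); lra).
    assert (s3 : s < sa) by (unfold s; unfold Rmax; destruct (Rle_dec _ _); lra).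
    destruct (F3 s ltac:(lra) ltac:(lra)) as [A1 A2].
    assert (cH : cool H s = num h) by (rewrite CEH; destruct (Rle_dec _ _); [lra|auto]).
    assert (cG : cool G s = tilde G s) by (rewrite CEG; destruct (Rle_dec _ _); [auto|lra]).
    rewrite cH, cG in A1, A2. rewrite (proj1 (sh1 _ _)) in A1. rewrite (proj2 (sh1 _ _)) in A2.
    assert (sa <= s) by (apply SG2; lra). lra.
  - assert (cS : cool (gadd G H) T = tilde (gadd G H) T) by (rewrite CES; destruct (Rle_dec _ _); [auto|lra]).
    rewrite cS. fold v. rewrite <- TS1. fold v.
    destruct (FG sa (Rle_refl _)) as [A1 A2]. destruct (FH sb (Rle_refl _)) as [B1 B2].
    destruct (ineqs (cool G sa) (cool H sb) (GcG sa SG0) (GcH sb SH0)) as (I1&I2&I2b&I3&I4&I4b).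
    split; lra.
Qed.

Lemma all_K1 G H : good G -> good H -> K1concl G H.
Proof.
  revert H. induction G as [a L b Rl IHL IHR] using game_ind2. intros H.
  induction H as [c M d N IHM IHN] using game_ind2. intros GG GH.
  intros t Ht HM. apply K1; auto. split.
  - intros x Hx t' Ht'. simpl in Hx.
    assert (Gx : good x) by (apply (good_opt (Gm a L b Rl)); auto).
    destruct Hx as [Hx|Hx].
    + apply (claim_from_K1 x (Gm c M d N) Gx GH (IHL x Hx _ Gx GH)); auto.
    + apply (claim_from_K1 x (Gm c M d N) Gx GH (IHR x Hx _ Gx GH)); auto.
  - intros z Hz t' Ht'. simpl in Hz.
    assert (Gz : good z) by (apply (good_opt (Gm c M d N)); auto).
    destruct Hz as [Hz|Hz].
    + apply (claim_from_K1 _ z GG Gz (IHM z Hz GG Gz)); auto.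
    + apply (claim_from_K1 _ z GG Gz (IHN z Hz GG Gz)); auto.
Qed.

Theorem mainTheorem3 (G H : game) :
  dicotic G -> nonzugzwang G -> terminal_numbers G ->
  dicotic H -> nonzugzwang H -> terminal_numbers H ->
  (forall t : R, 0 <= t ->
     Ls (cool (gadd G H) t) = Ls (gadd (cool G t) (cool H t)) /\
     Rs (cool (gadd G H) t) = Rs (gadd (cool G t) (cool H t))) /\
  temperature (gadd G H) <= Rmax (temperature G) (temperature H) /\
  (temperature H < temperature G -> temperature (gadd G H) = temperature G) /\
  Ls (cool (gadd G H) (temperature (gadd G H))) =
    Ls (gadd (cool G (temperature G)) (cool H (temperature H))) /\
  Rs (cool (gadd G H) (temperature (gadd G H))) =
    Rs (gadd (cool G (temperature G)) (cool H (temperature H))).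
Proof.
  intros D1 N1 T1 D2 N2 T2.
  assert (GG : good G) by (split; [|split]; auto).
  assert (GH : good H) by (split; [|split]; auto).
  assert (GS : good (gadd G H)) by (apply good_sum; auto).
  rewrite !temperature_sig by auto.
  apply claim_from_K1; auto. apply all_K1; auto.
Qed.
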